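(* Let $0<p<0.1$. If indefinite growth occurs, then either the event $E$ occurs, or else there exists a good sequence $R_1,\dots,R_{n+1}$ of rectangles such that the event $G(R_1)\cap\bigcap_{i=1}^n D(R_i,R_{i+1})$ occurs.
   Context: Local bootstrap percolation on $\mathbb{Z}^2$ with parameter $p\in(0,1)$: sites are empty ($\circ$), occupied ($\bullet$) or active ($\star$). The initial configuration $\sigma$ has independent sites; the origin is $\star$ with probability $p$, else $\circ$; every other site is $\bullet$ with probability $p$, else $\circ$. Synchronous deterministic updates: each $\bullet$ becomes $\star$ if some $\star$ is within $\ell^1$-distance $2$; each $\circ$ becomes $\star$ if at least two $\star$'s are within $\ell^1$-distance $1$; other states are unchanged. Indefinite growth: every site eventually becomes active. Let $q=-\log(1-p)$, $A=\lceil 1/\sqrt q\rceil$, $B=\lfloor q^{-1}\log q^{-1}\rfloor$. A rectangle is a set $R=\{a,\dots,c\}\times\{b,\dots,d\}\subset\mathbb{Z}^2$, with dimensions $\dim(R)=(c-a+1,d-b+1)$; its columns are the sets $\{x\}\times\{b,\dots,d\}$, $a\le x\le c$, and rows are defined analogously. $R$ has a double gap in the columns (resp. rows) if two consecutive columns (resp. rows) of $R$ consist entirely of sites that are $\circ$ in the initial configuration $\sigma$. $G(R)$ is the event that $R$ has no double gap in the columns or rows. For rectangles $R=\{x_1,\dots,x_2\}\times\{y_1,\dots,y_2\}\subseteq R'=\{X_1,\dots,X_2\}\times\{Y_1,\dots,Y_2\}$, $D(R,R')$ is the event that each of the (possibly empty) rectangles $\{X_1,\dots,x_1-1\}\times\{Y_1,\dots,Y_2\}$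 and $\{x_2+1,\dots,X_2\}\times\{Y_1,\dots,Y_2\}$ has no double gap in the columns, and each of $\{X_1,\dots,X_2\}\times\{Y_1,\dots,y_1-1\}$ and $\{X_1,\dots,X_2\}\times\{y_2+1,\dots,Y_2\}$ has no double gap in the rows. $E$ is the union of the events $G(R)$ over all rectangles $R$ containing $0$ with one dimension in $[B-A-10,B-A]$ and the other in $[1,A]$. A sequence of rectangles $R_1,\dots,R_{n+1}$ ($n\ge1$) with $\dim(R_i)=(a_i,b_i)$, $s_i=a_{i+1}-a_i$, $t_i=b_{i+1}-b_i$ is good if: (i) $0\in R_1\subseteq R_2\subseteq\dots\subseteq R_{n+1}$; (ii) $\min(a_1,b_1)\in[A,A+3]$; (iii) $a_n+b_n\le B$; (iv) $a_{n+1}+b_{n+1}>B$; (v) for $i=1,\dots,n$, $s_i\ge a_i\sqrt q$ or $t_i\ge b_i\sqrt q$; (vi) for $i=1,\dots,n$, $s_i<a_i\sqrt q+4$ and $t_i<b_i\sqrt q+4$. *)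

(* Defs.v *)
From Stdlib Require Import Reals ZArith List Lra Lia.
Import ListNotations.
Open Scope Z_scope.

(** Site states: empty (circ), occupied (bullet), active (star). *)
Inductive state := Emp | Occ | Act.

Definition site := (Z * Z)%type.
Definition config := site -> state.

Definition l1 (d : site) : Z := Z.abs (fst d) + Z.abs (snd d).
Definition addS (x d : site) : site := (fst x + fst d, snd x + snd d).

(** All offsets d with l1 d <= r, for r <= 2. *)
Definition zr : list Z := [-2; -1; 0; 1; 2].
Definition ball (r : Z) : list site :=
  filter (fun d => l1 d <=? r) (list_prod zr zr).

Definition is_act (s : state) : bool :=
  match s with Act => true | _ => false end.

Definition step (c : config) : config := fun x =>
  match c x with
  | Act => Act
  | Occ => if existsb (fun d => is_act (c (addS x d))) (ball 2) then Act else Occ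
  | Emp => if (2 <=? Z.of_nat (count_occ Bool.bool_dec
                   (map (fun d => is_act (c (addS x d))) (ball 1)) true))%Z
           then Act else Emp
  end.

Fixpoint evolve (c : config) (t : nat) : config :=
  match t with O => c | S t' => step (evolve c t') end.

Definition indefinite_growth (sigma : config) : Prop :=
  forall x : site, exists t : nat, evolve sigma t x = Act.

Definition admissible_init (sigma : config) : Prop :=
  (sigma (0, 0) = Act \/ sigma (0, 0) = Emp) /\
  (forall x, x <> (0, 0) -> sigma x = Occ \/ sigma x = Emp).

(** Rectangles {x1..x2} x {y1..y2} (possibly empty). *)
Record rect := Rect { rx1 : Z; rx2 : Z; ry1 : Z; ry2 : Z }.

Definition in_rect (R : rect) (z : site) : Prop :=
  rx1 R <= fst z <= rx2 R /\ ry1 R <= snd z <= ry2 R.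

Definition rect_sub (R R' : rect) : Prop :=
  forall z, in_rect R z -> in_rect R' z.

Definition width (R : rect) : Z := rx2 R - rx1 R + 1.
Definition height (R : rect) : Z := ry2 R - ry1 R + 1.

Definition dgap_cols (sigma : config) (R : rect) : Prop :=
  exists x, rx1 R <= x /\ x + 1 <= rx2 R /\
    forall y, ry1 R <= y <= ry2 R -> sigma (x, y) = Emp /\ sigma (x + 1, y) = Emp.

Definition dgap_rows (sigma : config) (R : rect) : Prop :=
  exists y, ry1 R <= y /\ y + 1 <= ry2 R /\
    forall x, rx1 R <= x <= rx2 R -> sigma (x, y) = Emp /\ sigma (x, y + 1) = Emp.

Definition Gev (sigma : config) (R : rect) : Prop :=
  ~ dgap_cols sigma R /\ ~ dgap_rows sigma R.

Definition Dev (sigma : config) (R R' : rect) : Prop :=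
  ~ dgap_cols sigma (Rect (rx1 R') (rx1 R - 1) (ry1 R') (ry2 R')) /\
  ~ dgap_cols sigma (Rect (rx2 R + 1) (rx2 R') (ry1 R') (ry2 R')) /\
  ~ dgap_rows sigma (Rect (rx1 R') (rx2 R') (ry1 R') (ry1 R - 1)) /\
  ~ dgap_rows sigma (Rect (rx1 R') (rx2 R') (ry2 R + 1) (ry2 R')).

Definition Zfloor (r : R) : Z := up r - 1.
Definition Zceil (r : R) : Z := - Zfloor (- r).

Definition qpar (p : R) : R := (- ln (1 - p))%R.
Definition Apar (p : R) : Z := Zceil (/ sqrt (qpar p)).
Definition Bpar (p : R) : Z := Zfloor (/ qpar p * ln (/ qpar p)).

Definition Eev (p : R) (sigma : config) : Prop :=
  exists Rc : rect, in_rect Rc (0, 0) /\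
    ((Bpar p - Apar p - 10 <= width Rc <= Bpar p - Apar p /\ 1 <= height Rc <= Apar p) \/
     (Bpar p - Apar p - 10 <= height Rc <= Bpar p - Apar p /\ 1 <= width Rc <= Apar p)) /\
    Gev sigma Rc.

Definition good_seq (p : R) (n : nat) (Rs : nat -> rect) : Prop :=
  (1 <= n)%nat /\
  in_rect (Rs 1%nat) (0, 0) /\
  (forall i, (1 <= i <= n)%nat -> rect_sub (Rs i) (Rs (S i))) /\
  Apar p <= Z.min (width (Rs 1%nat)) (height (Rs 1%nat)) <= Apar p + 3 /\
  width (Rs n) + height (Rs n) <= Bpar p /\
  width (Rs (S n)) + height (Rs (S n)) > Bpar p /\
  (forall i, (1 <= i <= n)%nat ->
     let a := width (Rs i) in let b := height (Rs i) in
     let s := width (Rs (S i)) - a in let t := height (Rs (S i)) - b in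
     ((IZR s >= IZR a * sqrt (qpar p))%R \/ (IZR t >= IZR b * sqrt (qpar p))%R) /\
     (IZR s < IZR a * sqrt (qpar p) + 4)%R /\ (IZR t < IZR b * sqrt (qpar p) + 4)%R).

(* Main.v *)
Require Import Defs.
From Stdlib Require Import Reals ZArith Lra Lia List Classical.
Import ListNotations.
Open Scope Z_scope.
Open Scope Z_scope.

Definition act (sigma : config) (t : nat) (z : site) : Prop := evolve sigma t z = Act.

Lemma ball1_eq : ball 1 = [(-1,0);(0,-1);(0,0);(0,1);(1,0)].
Proof. reflexivity. Qed.

Lemma is_act_true s : is_act s = true -> s = Act.
Proof. destruct s; simpl; congruence. Qed.

Lemma addS0 z : addS z (0,0) = z.
Proof. destruct z; unfold addS; simpl; f_equal; ring. Qed.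

Definition nb4 : list site := [(-1,0);(0,-1);(0,1);(1,0)].

Lemma step_act c z : c z = Act -> step c z = Act.
Proof. intro H; unfold step; rewrite H; reflexivity. Qed.

Ltac pick := match goal with
 | E1 : is_act (?c (addS ?z ?d1)) = true, E2 : is_act (?c (addS ?z ?d2)) = true |- _ =>
   exists d1, d2; split; [simpl; tauto|split;[simpl;tauto|split;[intro HH; inversion HH|split; apply is_act_true; assumption]]]
 end.

Lemma step_cases c z : step c z = Act ->
  c z = Act \/
  (c z = Occ /\ exists d, In d (ball 2) /\ c (addS z d) = Act) \/
  (c z = Emp /\ exists d1 d2, In d1 nb4 /\ In d2 nb4 /\ d1 <> d2 /\
      c (addS z d1) = Act /\ c (addS z d2) = Act).
Proof.
  unfold step. destruct (c z) eqn:Ez.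
  - rewrite ball1_eq. cbn [map]. rewrite addS0, Ez.
    intro H. right; right. split; [reflexivity|].
    destruct (is_act (c (addS z (-1,0)))) eqn:E1;
    destruct (is_act (c (addS z (0,-1)))) eqn:E2;
    destruct (is_act (c (addS z (0,1)))) eqn:E3;
    destruct (is_act (c (addS z (1,0)))) eqn:E4;
    vm_compute in H; try discriminate; pick.
  - intro H. right; left. split; [reflexivity|].
    destruct (existsb (fun d => is_act (c (addS z d))) (ball 2)) eqn:E; [|discriminate].
    apply existsb_exists in E. destruct E as [d [Hd1 Hd2]]. exists d. split; auto. apply is_act_true; auto.
  - auto.
Qed.

Lemma ball2_l1 d : In d (ball 2) -> l1 d <= 2.
Proof. unfold ball. intro H. apply filter_In in H. destruct H as [_ H]. apply Z.leb_le; auto. Qed.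

Lemma spread sigma t z : act sigma (S t) z -> act sigma t z \/ exists d, l1 d <= 2 /\ act sigma t (addS z d).
Proof.
  unfold act. simpl. intro H. apply step_cases in H.
  destruct H as [H|[[_ [d [H1 H2]]]|[_ [d1 [d2 [H1 [_ [_ [H2 _]]]]]]]]]; auto.
  - right. exists d. split; auto. apply ball2_l1; auto.
  - right. exists d1. split; auto. simpl in H1. unfold l1. destruct H1 as [<-|[<-|[<-|[<-|[]]]]]; simpl; lia.
Qed.
Open Scope Z_scope.

Lemma act_S sigma t z : act sigma t z -> act sigma (S t) z.
Proof. unfold act; simpl; apply step_act. Qed.

Lemma act_mono sigma t t' z : (t <= t')%nat -> act sigma t z -> act sigma t' z.
Proof. induction 1; auto using act_S. Qed.

Lemma emp_stays sigma z : sigma z = Emp -> forall t, evolve sigma t z = Emp \/ evolve sigma t z = Act.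
Proof.
  intros H t; induction t; simpl; auto.
  destruct IHt as [E|E].
  - unfold step. rewrite E. destruct (2 <=? _); auto.
  - right; apply step_act; auto.
Qed.

Lemma act0 sigma z : admissible_init sigma -> act sigma 0 z -> z = (0,0).
Proof.
  intros [_ H] Hz. unfold act in Hz; simpl in Hz.
  destruct (classic (z = (0,0))) as [e|n]; auto.
  destruct (H z n) as [e|e]; congruence.
Qed.

Definition unitv (a b : Z) := (a = 1 /\ b = 0) \/ (a = -1 /\ b = 0) \/ (a = 0 /\ b = 1) \/ (a = 0 /\ b = -1).

Lemma gap sigma a b c (Sp : site -> Prop) T :
  admissible_init sigma -> unitv a b -> 0 < c ->
  (forall z, (a*fst z + b*snd z = c \/ a*fst z + b*snd z = c+1) -> Sp z -> sigma z = Emp) ->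
  (forall z, act sigma T z -> Sp z) ->
  forall t, (t <= T)%nat -> forall z, act sigma t z -> a*fst z + b*snd z < c.
Proof.
  intros adm Hu Hc Hemp HS t. induction t as [|t IH]; intros Ht z Hz.
  - apply act0 in Hz; auto. subst z. simpl. lia.
  - assert (IH' : forall z, act sigma t z -> a*fst z + b*snd z < c) by (apply IH; lia).
    destruct (classic (act sigma t z)) as [Ha|Ha]; [auto|].
    destruct (spread _ _ _ Hz) as [H|[d [Hd Hd2]]]; [contradiction|].
    apply IH' in Hd2. unfold addS, l1 in *. simpl in Hd2.
    assert (Hle : a*fst z + b*snd z <= c+1) by (destruct Hu as [[-> ->]|[[-> ->]|[[-> ->]|[-> ->]]]]; lia).
    destruct (Z_lt_le_dec (a*fst z + b*snd z) c) as [Hlt|Hge]; auto.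
    exfalso.
    assert (Ez : sigma z = Emp).
    { apply Hemp; [lia|]. apply HS. apply act_mono with (Datatypes.S t); auto. }
    destruct (emp_stays _ _ Ez t) as [E|E]; [|contradiction].
    unfold act in Hz; simpl in Hz. apply step_cases in Hz.
    destruct Hz as [H|[[H _]|[_ [d1 [d2 [H1 [H2 [Hne [A1 A2]]]]]]]]]; try congruence.
    apply IH' in A1. apply IH' in A2. unfold addS in A1, A2.
    simpl in H1, H2.
    destruct H1 as [<-|[<-|[<-|[<-|[]]]]]; destruct H2 as [<-|[<-|[<-|[<-|[]]]]];
      try (apply Hne; reflexivity); simpl in A1, A2;
      destruct Hu as [[-> ->]|[[-> ->]|[[-> ->]|[-> ->]]]]; lia.
Qed.
Open Scope Z_scope.

Lemma Zmin_ex (P : Z -> Prop) lo : (exists k, P k) -> (forall k, P k -> lo <= k) ->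
  exists m, P m /\ forall k, P k -> m <= k.
Proof.
  intros [k0 Hk0] Hlo. apply NNPP; intro Hno.
  assert (Hall : forall n : nat, forall k, k < lo + Z.of_nat n -> ~ P k).
  { induction n; intros k Hk HP.
    - specialize (Hlo k HP); lia.
    - destruct (Z_lt_le_dec k (lo + Z.of_nat n)) as [h|h].
      + exact (IHn k h HP).
      + apply Hno. exists k. split; auto. intros k' Hk'.
        destruct (Z_lt_le_dec k' (lo + Z.of_nat n)) as [h'|h']; [exfalso; exact (IHn k' h' Hk')|lia]. }
  apply (Hall (Z.to_nat (k0 - lo + 1)) k0); auto.
  specialize (Hlo k0 Hk0). lia.
Qed.

Lemma Zmax_ex (P : Z -> Prop) hi : (exists k, P k) -> (forall k, P k -> k <= hi) ->
  exists m, P m /\ forall k, P k -> k <= m.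
Proof.
  intros [k0 Hk0] Hhi.
  destruct (Zmin_ex (fun k => P (-k)) (-hi)) as [m [Hm1 Hm2]].
  - exists (-k0). rewrite Z.opp_involutive; auto.
  - intros k Hk. specialize (Hhi _ Hk). lia.
  - exists (-m). split; auto. intros k Hk. assert (P (- - k)) by (rewrite Z.opp_involutive; auto).
    specialize (Hm2 _ H). lia.
Qed.

Lemma act_bound sigma t z : admissible_init sigma -> act sigma t z -> l1 z <= 2 * Z.of_nat t.
Proof.
  intro adm. revert z. induction t; intros z Hz.
  - apply act0 in Hz; auto. subst; simpl. reflexivity.
  - destruct (spread _ _ _ Hz) as [H|[d [Hd H]]].
    + specialize (IHt _ H). lia.
    + specialize (IHt _ H). unfold l1, addS in *. cbn [fst snd] in *. lia.
Qed.

Definition isBB sigma t R :=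
  (forall z, act sigma t z -> in_rect R z) /\
  (exists z, act sigma t z /\ fst z = rx1 R) /\ (exists z, act sigma t z /\ fst z = rx2 R) /\
  (exists z, act sigma t z /\ snd z = ry1 R) /\ (exists z, act sigma t z /\ snd z = ry2 R).

Lemma act_origin sigma t : sigma (0,0) = Act -> act sigma t (0,0).
Proof. intro H. apply act_mono with 0%nat; [lia|exact H]. Qed.

Lemma BB_ex sigma t : admissible_init sigma -> sigma (0,0) = Act -> exists R, isBB sigma t R.
Proof.
  intros adm H0.
  assert (Ho := act_origin _ t H0).
  assert (Hb := fun z => act_bound sigma t z adm).
  destruct (Zmin_ex (fun k => exists z, act sigma t z /\ fst z = k) (- 2 * Z.of_nat t)) as [x1 [[z1 [Hz1 E1]] Hx1]].
  { exists 0. exists (0,0); auto. }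
  { intros k [z [Hz <-]]. specialize (Hb z Hz). unfold l1 in Hb. lia. }
  destruct (Zmax_ex (fun k => exists z, act sigma t z /\ fst z = k) (2 * Z.of_nat t)) as [x2 [[z2 [Hz2 E2]] Hx2]].
  { exists 0. exists (0,0); auto. }
  { intros k [z [Hz <-]]. specialize (Hb z Hz). unfold l1 in Hb. lia. }
  destruct (Zmin_ex (fun k => exists z, act sigma t z /\ snd z = k) (- 2 * Z.of_nat t)) as [y1 [[z3 [Hz3 E3]] Hy1]].
  { exists 0. exists (0,0); auto. }
  { intros k [z [Hz <-]]. specialize (Hb z Hz). unfold l1 in Hb. lia. }
  destruct (Zmax_ex (fun k => exists z, act sigma t z /\ snd z = k) (2 * Z.of_nat t)) as [y2 [[z4 [Hz4 E4]] Hy2]].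
  { exists 0. exists (0,0); auto. }
  { intros k [z [Hz <-]]. specialize (Hb z Hz). unfold l1 in Hb. lia. }
  exists (Rect x1 x2 y1 y2). unfold isBB, in_rect; simpl.
  split; [|split; [eauto|split; [eauto|split; eauto]]].
  intros z Hz. repeat split.
  - apply Hx1; eauto. - apply Hx2; eauto. - apply Hy1; eauto. - apply Hy2; eauto.
Qed.

Lemma BB_origin sigma t R : sigma (0,0) = Act -> isBB sigma t R -> in_rect R (0,0).
Proof. intros H [HR _]. apply HR, act_origin; auto. Qed.

Lemma BB_mono sigma t t' R R' : (t <= t')%nat -> isBB sigma t R -> isBB sigma t' R' ->
  rx1 R' <= rx1 R /\ rx2 R <= rx2 R' /\ ry1 R' <= ry1 R /\ ry2 R <= ry2 R'.
Proof.
  intros Ht [_ [[z1 [A1 E1]] [[z2 [A2 E2]] [[z3 [A3 E3]] [z4 [A4 E4]]]]]] [HR' _].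
  apply (act_mono _ _ t') in A1, A2, A3, A4; auto.
  apply HR' in A1, A2, A3, A4. unfold in_rect in *. lia.
Qed.

Lemma BB_unique sigma t R R' : isBB sigma t R -> isBB sigma t R' -> R = R'.
Proof.
  intros H1 H2. destruct (BB_mono _ _ _ _ _ (le_n t) H1 H2) as [a [b [c d]]].
  destruct (BB_mono _ _ _ _ _ (le_n t) H2 H1) as [a' [b' [c' d']]].
  destruct R, R'; simpl in *. f_equal; lia.
Qed.

Lemma BB_step sigma t R R' : isBB sigma t R -> isBB sigma (S t) R' ->
  rx1 R - 2 <= rx1 R' /\ rx2 R' <= rx2 R + 2 /\ ry1 R - 2 <= ry1 R' /\ ry2 R' <= ry2 R + 2.
Proof.
  intros [HR _] [_ [[z1 [A1 E1]] [[z2 [A2 E2]] [[z3 [A3 E3]] [z4 [A4 E4]]]]]].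
  destruct (spread _ _ _ A1) as [B1|[d1 [D1 B1]]]; apply HR in B1;
  destruct (spread _ _ _ A2) as [B2|[d2 [D2 B2]]]; apply HR in B2;
  destruct (spread _ _ _ A3) as [B3|[d3 [D3 B3]]]; apply HR in B3;
  destruct (spread _ _ _ A4) as [B4|[d4 [D4 B4]]]; apply HR in B4;
  unfold in_rect, addS, l1 in *; simpl in *; lia.
Qed.

Lemma colgap sigma T R x : admissible_init sigma -> sigma (0,0) = Act -> isBB sigma T R ->
  (forall y, ry1 R <= y <= ry2 R -> sigma (x,y) = Emp /\ sigma (x+1,y) = Emp) ->
  rx2 R < x \/ x + 1 < rx1 R.
Proof.
  intros adm H0 HB Hg.
  assert (Ho := BB_origin _ _ _ H0 HB). unfold in_rect in Ho; simpl in Ho.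
  destruct HB as [HR [[z1 [A1 E1]] [[z2 [A2 E2]] _]]].
  destruct (Z.eq_dec x 0) as [e|n].
  { subst. destruct (Hg 0) as [h _]; [lia|]. congruence. }
  destruct (Z.eq_dec (x+1) 0) as [e|n'].
  { destruct (Hg 0) as [_ h]; [lia|]. rewrite e in h. congruence. }
  destruct (Z_lt_le_dec 0 x) as [hp|hn].
  - left.
    assert (G := gap sigma 1 0 x (fun z => ry1 R <= snd z <= ry2 R) T adm ltac:(unfold unitv; lia) hp).
    assert (G' : 1 * fst z2 + 0 * snd z2 < x).
    { apply G with T; [|intros z Hz; apply HR in Hz; unfold in_rect in Hz; lia|lia|exact A2].
      intros [u v] Hu Hv; cbn [fst snd] in *; destruct Hu as [Hu|Hu];
        [replace u with x by lia; apply Hg; auto| replace u with (x+1) by lia; apply Hg; auto]. }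
    lia.
  - right.
    assert (G := gap sigma (-1) 0 (-(x+1)) (fun z => ry1 R <= snd z <= ry2 R) T adm ltac:(unfold unitv; lia) ltac:(lia)).
    assert (G' : -1 * fst z1 + 0 * snd z1 < -(x+1)).
    { apply G with T; [|intros z Hz; apply HR in Hz; unfold in_rect in Hz; lia|lia|exact A1].
      intros [u v] Hu Hv; cbn [fst snd] in *; destruct Hu as [Hu|Hu];
        [replace u with (x+1) by lia; apply Hg; auto| replace u with x by lia; apply Hg; auto]. }
    lia.
Qed.

Lemma rowgap sigma T R y : admissible_init sigma -> sigma (0,0) = Act -> isBB sigma T R ->
  (forall x, rx1 R <= x <= rx2 R -> sigma (x,y) = Emp /\ sigma (x,y+1) = Emp) ->
  ry2 R < y \/ y + 1 < ry1 R.
Proof.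
  intros adm H0 HB Hg.
  assert (Ho := BB_origin _ _ _ H0 HB). unfold in_rect in Ho; simpl in Ho.
  destruct HB as [HR [_ [_ [[z1 [A1 E1]] [z2 [A2 E2]]]]]].
  destruct (Z.eq_dec y 0) as [e|n].
  { subst. destruct (Hg 0) as [h _]; [lia|]. congruence. }
  destruct (Z.eq_dec (y+1) 0) as [e|n'].
  { destruct (Hg 0) as [_ h]; [lia|]. rewrite e in h. congruence. }
  destruct (Z_lt_le_dec 0 y) as [hp|hn].
  - left.
    assert (G := gap sigma 0 1 y (fun z => rx1 R <= fst z <= rx2 R) T adm ltac:(unfold unitv; lia) hp).
    assert (G' : 0 * fst z2 + 1 * snd z2 < y).
    { apply G with T; [|intros z Hz; apply HR in Hz; unfold in_rect in Hz; lia|lia|exact A2].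
      intros [u v] Hu Hv; cbn [fst snd] in *; destruct Hu as [Hu|Hu];
        [replace v with y by lia; apply Hg; auto| replace v with (y+1) by lia; apply Hg; auto]. }
    lia.
  - right.
    assert (G := gap sigma 0 (-1) (-(y+1)) (fun z => rx1 R <= fst z <= rx2 R) T adm ltac:(unfold unitv; lia) ltac:(lia)).
    assert (G' : 0 * fst z1 + -1 * snd z1 < -(y+1)).
    { apply G with T; [|intros z Hz; apply HR in Hz; unfold in_rect in Hz; lia|lia|exact A1].
      intros [u v] Hu Hv; cbn [fst snd] in *; destruct Hu as [Hu|Hu];
        [replace v with (y+1) by lia; apply Hg; auto| replace v with y by lia; apply Hg; auto]. }
    lia.
Qed.

Lemma BB_G sigma T R : admissible_init sigma -> sigma (0,0) = Act -> isBB sigma T R -> Gev sigma R.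
Proof.
  intros adm H0 HB. split.
  - intros [x [h1 [h2 Hg]]]. destruct (colgap _ _ _ x adm H0 HB Hg); lia.
  - intros [y [h1 [h2 Hg]]]. destruct (rowgap _ _ _ y adm H0 HB Hg); lia.
Qed.

Lemma BB_D sigma t t' R R' : admissible_init sigma -> sigma (0,0) = Act -> (t <= t')%nat ->
  isBB sigma t R -> isBB sigma t' R' -> Dev sigma R R'.
Proof.
  intros adm H0 Ht HB HB'.
  destruct (BB_mono _ _ _ _ _ Ht HB HB') as [m1 [m2 [m3 m4]]].
  assert (Ho := BB_origin _ _ _ H0 HB). unfold in_rect in Ho; simpl in Ho.
  unfold Dev; repeat split.
  - intros [x [h1 [h2 Hg]]]; simpl in *. destruct (colgap _ _ _ x adm H0 HB' Hg); lia.
  - intros [x [h1 [h2 Hg]]]; simpl in *. destruct (colgap _ _ _ x adm H0 HB' Hg); lia.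
  - intros [y [h1 [h2 Hg]]]; simpl in *. destruct (rowgap _ _ _ y adm H0 HB' Hg); lia.
  - intros [y [h1 [h2 Hg]]]; simpl in *. destruct (rowgap _ _ _ y adm H0 HB' Hg); lia.
Qed.

Lemma BB_unbounded sigma t N : admissible_init sigma -> sigma (0,0) = Act -> indefinite_growth sigma ->
  exists t', (t < t')%nat /\ exists R, isBB sigma t' R /\ N <= width R /\ N <= height R.
Proof.
  intros adm H0 ig.
  destruct (ig (Z.abs N, Z.abs N)) as [t0 Ht0].
  exists (S (t + t0)). split; [lia|].
  destruct (BB_ex sigma (S (t + t0)) adm H0) as [R HR]. exists R. split; auto.
  assert (Ho := BB_origin _ _ _ H0 HR).
  destruct HR as [HR _].
  assert (A := HR _ (act_mono _ t0 (S (t + t0)) _ ltac:(lia) Ht0)).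
  unfold in_rect, width, height in *; simpl in *. lia.
Qed.
Open Scope R_scope.

Lemma floor_spec r : IZR (Defs.Zfloor r) <= r < IZR (Defs.Zfloor r) + 1.
Proof.
  unfold Defs.Zfloor. destruct (archimed r) as [h1 h2]. rewrite minus_IZR. simpl. lra.
Qed.

Lemma ceil_spec r : r <= IZR (Defs.Zceil r) < r + 1.
Proof.
  unfold Defs.Zceil. destruct (floor_spec (-r)) as [h1 h2]. rewrite opp_IZR. lra.
Qed.

Lemma nums p : 0 < p < 1/10 ->
  0 < sqrt (qpar p) < 1 /\ (4 <= Apar p)%Z /\ (12 <= Bpar p - Apar p)%Z.
Proof.
  intros [hp0 hp1].
  set (q := qpar p).
  assert (Hq0 : 0 < q).
  { unfold q, qpar. assert (ln (1 - p) < 0); [|lra].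
    rewrite <- ln_1. apply ln_increasing; lra. }
  assert (Hq1 : q < 1/9).
  { unfold q, qpar.
    assert (e1 : 1 + 1/9 < exp (1/9)) by (apply exp_ineq1; lra).
    assert (e2 : exp (-(1/9)) < 1 - p).
    { rewrite exp_Ropp. apply Rlt_le_trans with (/ (1 + 1/9)).
      - apply Rinv_lt_contravar; [|lra]. apply Rmult_lt_0_compat; lra.
      - lra. }
    assert (ln (exp (-(1/9))) < ln (1-p)) by (apply ln_increasing; [apply exp_pos|exact e2]).
    rewrite ln_exp in H. lra. }
  set (sq := sqrt q).
  assert (Hsq0 : 0 < sq) by (apply sqrt_lt_R0; lra).
  assert (Hsqq : sq * sq = q) by (apply sqrt_sqrt; lra).
  set (s := / sq).
  set (u := / q).
  assert (Hsu : s * s = u).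
  { unfold s, u. rewrite <- Hsqq. field. lra. }
  assert (Hu : 9 < u).
  { unfold u. replace 9 with (/ (1/9)) by field.
    apply Rinv_lt_contravar; [|lra]. nra. }
  assert (Hs0 : 0 < s) by (unfold s; apply Rinv_0_lt_compat; lra).
  assert (Hs3 : 3 < s) by nra.
  assert (Hsq1 : sq < 1).
  { assert (sq * s = 1) by (unfold s; field; lra). nra. }
  assert (Hln : 2 < ln u).
  { assert (exp 2 <= 9).
    { replace 2 with (1 + 1) by lra. rewrite exp_plus. assert (H3 := exp_le_3).
      assert (0 < exp 1) by apply exp_pos. nra. }
    rewrite <- (ln_exp 2). apply ln_increasing; [apply exp_pos|lra]. }
  assert (HA := ceil_spec s). assert (HB := floor_spec (u * ln u)).
  fold q sq s u in HA, HB |- *.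
  unfold Apar, Bpar. fold q. fold sq. fold s. fold u.
  split; [lra|]. split.
  - clearbody q sq s u. cut (3 < Defs.Zceil s)%Z; [lia|]. apply lt_IZR. lra.
  - clearbody q sq s u. cut (11 < Defs.Zfloor (u * ln u) - Defs.Zceil s)%Z; [lia|]. apply lt_IZR. rewrite minus_IZR.
    assert (u * ln u >= 2 * u).
    { rewrite Rmult_comm. apply Rle_ge. apply Rmult_le_compat_r; lra. }
    assert (u > 3 * s) by nra. lra.
Qed.
Open Scope Z_scope.

Lemma nat_min (P : nat -> Prop) : (exists n, P n) -> exists n, P n /\ forall m, (m < n)%nat -> ~ P m.
Proof.
  intros [n Hn]. apply NNPP; intro Hno.
  assert (H : forall k, forall m, (m <= k)%nat -> ~ P m).
  { induction k; intros m Hm HP.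
    - apply Hno. exists m. split; auto. intros; lia.
    - destruct (Nat.eq_dec m (S k)) as [->|ne].
      + apply Hno. exists (S k). split; auto. intros m' Hm'. apply IHk; lia.
      + apply (IHk m); auto; lia. }
  exact (H n n (le_n n) Hn).
Qed.

Definition cond (p : R) (R0 R1 : rect) : Prop :=
  (IZR (width R1 - width R0) >= IZR (width R0) * sqrt (qpar p))%R \/
  (IZR (height R1 - height R0) >= IZR (height R0) * sqrt (qpar p))%R.

Definition bnd (p : R) (R0 R1 : rect) : Prop :=
  (IZR (width R1 - width R0) < IZR (width R0) * sqrt (qpar p) + 4)%R /\
  (IZR (height R1 - height R0) < IZR (height R0) * sqrt (qpar p) + 4)%R.

Definition Tail p sigma R := exists n Rs, (1 <= n)%nat /\ Rs 1%nat = R /\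
  (forall i, (1 <= i <= n)%nat -> rect_sub (Rs i) (Rs (S i)) /\ Dev sigma (Rs i) (Rs (S i)) /\
      cond p (Rs i) (Rs (S i)) /\ bnd p (Rs i) (Rs (S i))) /\
  width (Rs n) + height (Rs n) <= Bpar p /\ width (Rs (S n)) + height (Rs (S n)) > Bpar p.

Lemma BB_sub sigma t t' R R' : (t <= t')%nat -> isBB sigma t R -> isBB sigma t' R' -> rect_sub R R'.
Proof.
  intros Ht H H'. destruct (BB_mono _ _ _ _ _ Ht H H') as [a [b [c d]]].
  intros z. unfold in_rect. lia.
Qed.

Lemma BB_dims sigma t R : sigma (0,0) = Act -> isBB sigma t R -> 1 <= width R /\ 1 <= height R.
Proof. intros H0 HB. assert (Ho := BB_origin _ _ _ H0 HB). unfold in_rect, width, height in *; simpl in *; lia. Qed.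

Lemma tail_lemma p sigma : admissible_init sigma -> sigma (0,0) = Act -> indefinite_growth sigma ->
  (0 < sqrt (qpar p) < 1)%R ->
  forall k : nat, forall t R, isBB sigma t R -> width R + height R <= Bpar p ->
    Bpar p - (width R + height R) < Z.of_nat k -> Tail p sigma R.
Proof.
  intros adm H0 ig Hsq k. induction k as [|k IH]; intros t R HB HwB Hk; [lia|].
  destruct (BB_dims _ _ _ H0 HB) as [Hw1 Hh1].
  destruct (nat_min (fun m => exists R', isBB sigma (t + 1 + m) R' /\ cond p R R')) as [m [[R' [HB' Hc]] Hmin]].
  { destruct (BB_unbounded sigma t (2 * width R) adm H0 ig) as [t' [Ht' [R' [HB' [Hw _]]]]].
    exists (t' - t - 1)%nat. exists R'. replace (t + 1 + (t' - t - 1))%nat with t' by lia. split; auto.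
    left. assert (IZR (width R) <= IZR (width R' - width R))%R by (apply IZR_le; lia).
    assert (0 <= IZR (width R))%R by (apply IZR_le; lia). nra. }
  destruct (BB_ex sigma (t + m) adm H0) as [Rp HBp].
  assert (Hnc : ~ cond p R Rp).
  { destruct m as [|m'].
    - replace (t + 0)%nat with t in HBp by lia. rewrite (BB_unique _ _ _ _ HBp HB).
      unfold cond. rewrite Z.sub_diag, Z.sub_diag.
      assert (0 < IZR (width R))%R by (apply IZR_lt; lia).
      assert (0 < IZR (height R))%R by (apply IZR_lt; lia). nra.
    - intro Hc'. apply (Hmin m'); [lia|]. exists Rp. split; auto.
      replace (t + 1 + m')%nat with (t + S m')%nat by lia. auto. }
  assert (Hst := BB_step sigma (t + m) Rp R' HBp ltac:(replace (S (t + m)) with (t + 1 + m)%nat by lia; exact HB')).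
  assert (Hmo := BB_mono sigma t (t + 1 + m) R R' ltac:(lia) HB HB').
  assert (Hmop := BB_mono sigma t (t + m) R Rp ltac:(lia) HB HBp).
  assert (Hb : bnd p R R').
  { unfold cond, bnd in *.
    apply Classical_Prop.not_or_and in Hnc. destruct Hnc as [n1 n2].
    apply Rnot_ge_lt in n1, n2.
    assert (IZR (width R' - width R) <= IZR (width Rp - width R) + 4)%R.
    { rewrite <- plus_IZR. apply IZR_le. unfold width in *; lia. }
    assert (IZR (height R' - height R) <= IZR (height Rp - height R) + 4)%R.
    { rewrite <- plus_IZR. apply IZR_le. unfold height in *; lia. }
    split; lra. }
  assert (Hgrow : width R + height R < width R' + height R').
  { unfold cond in Hc.
    assert (0 < IZR (width R))%R by (apply IZR_lt; lia).
    assert (0 < IZR (height R))%R by (apply IZR_lt; lia).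
    destruct Hc as [Hc|Hc].
    - assert (0 < width R' - width R). { apply lt_IZR. nra. }
      unfold width, height in *; lia.
    - assert (0 < height R' - height R). { apply lt_IZR. nra. }
      unfold width, height in *; lia. }
  assert (HD := BB_D sigma t (t + 1 + m) R R' adm H0 ltac:(lia) HB HB').
  assert (Hsub := BB_sub sigma t (t + 1 + m) R R' ltac:(lia) HB HB').
  destruct (Z_lt_le_dec (Bpar p) (width R' + height R')) as [Hbig|Hsmall].
  - exists 1%nat, (fun i => match i with 2%nat => R' | _ => R end).
    split; [lia|]. split; [reflexivity|]. split; [|split; [exact HwB|lia]].
    intros i Hi. replace i with 1%nat by lia. auto.
  - destruct (IH (t + 1 + m)%nat R' HB' Hsmall ltac:(lia)) as [n' [Rs' [Hn' [E1 [Hall [Hn1 Hn2]]]]]].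
    exists (S n'), (fun i => match i with O | S O => R | S j => Rs' j end).
    split; [lia|]. split; [reflexivity|].
    split; [|destruct n' as [|n'']; [lia|]; split; assumption].
    intros i Hi. destruct i as [|[|j]]; [lia| |].
    + rewrite E1. auto.
    + apply (Hall (S j)). lia.
Qed.
Open Scope Z_scope.

Lemma act_back sigma t z : act sigma t z -> exists z0, act sigma 0 z0.
Proof.
  revert z; induction t; intros z H; eauto.
  destruct (spread _ _ _ H) as [H'|[d [_ H']]]; eauto.
Qed.

Lemma origin_act sigma : admissible_init sigma -> indefinite_growth sigma -> sigma (0,0) = Act.
Proof.
  intros adm ig. destruct (ig (0,0)) as [t Ht].
  destruct (act_back _ _ _ Ht) as [z0 H0].
  assert (E := act0 _ _ adm H0). subst. exact H0.
Qed.

Lemma BB0 sigma R : admissible_init sigma -> isBB sigma 0 R -> width R = 1 /\ height R = 1.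
Proof.
  intros adm [_ [[z1 [A1 E1]] [[z2 [A2 E2]] [[z3 [A3 E3]] [z4 [A4 E4]]]]]].
  apply act0 in A1, A2, A3, A4; auto. subst. unfold width, height. simpl in *. lia.
Qed.

Theorem lemma4 (p : R) (sigma : config) :
  (0 < p < 1 / 10)%R ->
  admissible_init sigma ->
  indefinite_growth sigma ->
  Eev p sigma \/
  exists (n : nat) (Rs : nat -> rect),
    good_seq p n Rs /\ Gev sigma (Rs 1%nat) /\
    (forall i, (1 <= i <= n)%nat -> Dev sigma (Rs i) (Rs (S i))).
Proof.
  intros Hp adm ig.
  assert (H0 := origin_act _ adm ig).
  destruct (nums p Hp) as [Hsq [HA HBA]].
  destruct (nat_min (fun t => exists R, isBB sigma t R /\ Apar p <= Z.min (width R) (height R)))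
    as [t1 [[R1 [HB1 Hm1]] Hmin1]].
  { destruct (BB_unbounded sigma 0 (Apar p) adm H0 ig) as [t' [_ [R' [HB' [Hw Hh]]]]].
    exists t', R'. split; [auto|lia]. }
  destruct t1 as [|t0].
  { apply BB0 in HB1; auto. lia. }
  destruct (BB_ex sigma t0 adm H0) as [R0 HB0].
  assert (Hn0 : Z.min (width R0) (height R0) < Apar p).
  { apply Z.nle_gt; intro h. apply (Hmin1 t0 ltac:(lia)). exists R0. split; [auto|lia]. }
  assert (Hst := BB_step _ _ _ _ HB0 HB1).
  assert (Hup : Z.min (width R1) (height R1) <= Apar p + 3) by (unfold width, height in *; lia).
  assert (Ho1 := BB_origin _ _ _ H0 HB1).
  destruct (Z_le_gt_dec (width R1 + height R1) (Bpar p)) as [Hsm|Hbig].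
  - right.
    destruct (tail_lemma p sigma adm H0 ig Hsq (S (Z.to_nat (Bpar p - (width R1 + height R1))))
               (S t0) R1 HB1 Hsm ltac:(lia)) as [n [Rs [Hn [E1 [Hall [Hn1 Hn2]]]]]].
    exists n, Rs. rewrite E1.
    split; [|split; [eapply BB_G; eauto|intros i Hi; apply Hall; auto]].
    unfold good_seq. rewrite E1.
    split; [auto|]. split; [auto|]. split; [intros i Hi; apply Hall; auto|].
    split; [lia|]. split; [auto|]. split; [auto|].
    intros i Hi. destruct (Hall i Hi) as [_ [_ [Hc [Hb1 Hb2]]]]. cbv zeta. auto.
  - left.
    destruct (nat_min (fun t => exists R, isBB sigma t R /\ Bpar p - Apar p - 10 <= Z.max (width R) (height R)))
      as [ts [[Rs [HBs Hms]] Hmins]].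
    { exists t0, R0. split; auto. unfold width, height in *; lia. }
    assert (Hts : (ts <= t0)%nat).
    { destruct (Nat.le_gt_cases ts t0) as [h|h]; auto. exfalso. apply (Hmins t0 h). exists R0.
      split; auto. unfold width, height in *; lia. }
    assert (Hmn : Z.min (width Rs) (height Rs) < Apar p).
    { apply Z.nle_gt; intro h. apply (Hmin1 ts ltac:(lia)). exists Rs. split; [auto|lia]. }
    destruct ts as [|ts'].
    { apply BB0 in HBs; auto. lia. }
    destruct (BB_ex sigma ts' adm H0) as [Rq HBq].
    assert (Hq : Z.max (width Rq) (height Rq) < Bpar p - Apar p - 10).
    { apply Z.nle_gt; intro h. apply (Hmins ts'); [lia|]. exists Rq. split; [auto|lia]. }
    assert (Hst2 := BB_step _ _ _ _ HBq HBs).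
    assert (Hd := BB_dims _ _ _ H0 HBs).
    exists Rs. split; [eapply BB_origin; eauto|]. split; [|eapply BB_G; eauto].
    unfold width, height in *. lia.
Qed.
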